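(* Let $K$ be a field, $G(V,E)$ a finite simple graph, and $\mathfrak{g}$ the $2$-step nilpotent graph Lie algebra associated to $G(V,E)$. Then $$\chi(\mathfrak{g})=\dim\mathfrak{g}-2\nu(G(V,E))=|V|+|E|-2\nu(G(V,E)).$$
   Context: Graph Lie algebra: let $U$ be the $K$-vector space with basis $V$, and $W\subseteq\Lambda^2(U)$ the subspace spanned by $\{v_1\wedge v_2\mid \{v_1,v_2\}\in E\}$. The Lie algebra $\mathfrak{g}$ has underlying space $U\oplus W$ (so $\dim\mathfrak{g}=|V|+|E|$), with $W$ central, and for $v_1,v_2\in V$: $[v_1,v_2]=v_1\wedge v_2$ if $\{v_1,v_2\}\in E$ and $[v_1,v_2]=0$ otherwise. A matching of $G(V,E)$ is a set $S\subseteq E$ of edges such that each vertex lies in at most one edge of $S$; the matching number $\nu(G(V,E))$ is the maximum number of edges in a matching. For a finite-dimensional Lie algebra $\mathfrak{h}$ and $\ell\in\mathfrak{h}^*$, $\mathfrak{h}(\ell)=\{y\in\mathfrak{h}\mid\ell([x,y])=0\ \forall x\in\mathfrak{h}\}$ and the index is $\chi(\mathfrak{h})=\min_{\ell\in\mathfrak{h}^*}\dim\mathfrak{h}(\ell)$. *)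

(* Defs.v *)
From HB Require Import structures.
From mathcomp Require Import all_boot all_order all_algebra.
Set Implicit Arguments. Unset Strict Implicit. Unset Printing Implicit Defensive.
Import GRing.Theory.
Local Open Scope ring_scope.

(* Each edge {u,v} is
   represented exactly once, as the ordered pair (u,v) with u before v in the
   enumeration order of T; this fixes the orientation of the basis vector
   u /\ v of W (the other orientation is v /\ u = - u /\ v). *)
Definition edge_pred (T : finType) (e : rel T) : pred (T * T) :=
  fun p => e p.1 p.2 && (enum_rank p.1 < enum_rank p.2)%N.

Notation Edge T e := {p : T * T | @edge_pred T e p}.

(* The graph Lie algebra g = U (+) W, with U = K^V (basis V) and W = K^E
   (basis { u /\ v | {u,v} in E }), as a K-vector space (vectType). *)
Notation graphLie K T e :=
  ({ffun T -> K^o} * {ffun Edge T e -> K^o})%type.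

(* Lie bracket: W is central, and for x = (a, w), y = (b, w'),
   [x, y] = sum_{u<v, {u,v} in E} (a_u b_v - a_v b_u) (u /\ v),
   the bilinear extension of [v1,v2] = v1 /\ v2 on edges, 0 on non-edges. *)
Definition glie_bracket (K : fieldType) (T : finType) (e : rel T)
  (x y : graphLie K T e) : graphLie K T e :=
  (0, [ffun p : Edge T e =>
         x.1 (val p).1 * y.1 (val p).2 - x.1 (val p).2 * y.1 (val p).1]).

(* g(l) = { y | l([x,y]) = 0 for all x }, i.e. the kernel of the linear map
   y |-> (x |-> l([x,y])) from g to its dual g^* = 'Hom(g, K). *)
Definition stabilizer (K : fieldType) (T : finType) (e : rel T)
  (l : 'Hom(graphLie K T e, K^o)) : {vspace graphLie K T e} :=
  lker (linfun (fun y : graphLie K T e =>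
          (linfun (fun x : graphLie K T e => l (glie_bracket x y))
            : 'Hom(graphLie K T e, K^o)))).

Definition is_matching (T : finType) (e : rel T) (S : {set Edge T e}) : bool :=
  [forall v : T, #|[set p in S | ((val p).1 == v) || ((val p).2 == v)]| <= 1]%N.

Definition matching_number (T : finType) (e : rel T) : nat :=
  \max_(S : {set Edge T e} | is_matching S) #|S|.

(* Main.v *)
Require Import Defs.
From HB Require Import structures.
From mathcomp Require Import all_boot all_order all_fingroup all_algebra.
From mathcomp Require Import ring zify.
Set Implicit Arguments. Unset Strict Implicit. Unset Printing Implicit Defensive.
Import GRing.Theory.
Local Open Scope ring_scope.


Lemma sum_invol (R : zmodType) (I : finType) (S : {set I}) (g : I -> I) (f : I -> R) :
  (forall x, x \in S -> [/\ g x \in S, g (g x) = x, g x != x & f (g x) = - f x]) ->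
  \sum_(x in S) f x = 0.
Proof.
move: {2}#|S| (leqnn #|S|) => n; elim: n S => [|n IH] S hS H.
  by move: hS; rewrite leqn0 => /eqP/cards0_eq ->; rewrite big_set0.
case: (set_0Vmem S) => [->|[x xS]]; first by rewrite big_set0.
have [gxS ggx gxx fgx] := H x xS.
rewrite (bigD1 x) //= (bigD1 (g x)) /=; last by rewrite gxS gxx.
set S' := S :\ x :\ g x.
have -> : \sum_(i | (i \in S) && (i != x) && (i != g x)) f i = \sum_(i in S') f i.
  by apply: eq_bigl => i; rewrite !inE; case: (i \in S); case: (i != x); case: (i != g x).
rewrite IH ?fgx ?addr0 ?subrr //.
  move: hS; rewrite (cardsD1 x S) xS (cardsD1 (g x) (S :\ x)) !inE gxx gxS /=.
  by rewrite add1n add1n ltnS; apply: leq_trans; rewrite leqnSn.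
move=> y; rewrite !inE => /and3P[ygx yx yS].
have [gyS ggy gyy fgy] := H y yS.
split => //; rewrite gyS andbT; apply/andP; split.
  by apply: contraNneq yx => e; rewrite -ggy e ggx.
by apply: contraNneq ygx => e; rewrite -ggy e.
Qed.
Section Iota.
Variable X : finType.
Implicit Types (s t : {perm X}) (x y z : X).
Local Open Scope group_scope.

Lemma porbit_agree s t y :
  (forall z, z \in porbit s y -> t z = s z) -> porbit t y = porbit s y.
Proof.
move=> H.
have E : forall i, (t ^+ i) y = (s ^+ i) y.
  elim=> [|i IH]; first by rewrite !expg0.
  by rewrite !expgSr !permM IH H // mem_porbit.
by apply/setP => z; apply/porbitP/porbitP => -[i ->]; exists i; rewrite E.
Qed.

Lemma mem_porbitS s x y : (s y \in porbit s x) = (y \in porbit s x).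
Proof.
rewrite porbit_sym [y \in _]porbit_sym.
by have := porbit_perm s 1 y; rewrite expg1 => ->.
Qed.

Lemma mem_porbitV s x y : (s^-1 y \in porbit s x) = (y \in porbit s x).
Proof. by rewrite -{2}[y](permKV s) mem_porbitS. Qed.

Definition rinv s x0 x := if x \in porbit s x0 then s^-1 x else x.

Lemma rinv_inj s x0 : injective (rinv s x0).
Proof.
move=> x y; rewrite /rinv.
case xC: (x \in porbit s x0); case yC: (y \in porbit s x0).
- exact: perm_inj.
- by move=> e; move: yC; rewrite -e mem_porbitV xC.
- by move=> e; move: xC; rewrite e mem_porbitV yC.
- by [].
Qed.

Definition oddpt s := [pick x | odd #|porbit s x|].

Definition iota s : {perm X} :=
  if oddpt s is Some x0 then (perm (@rinv_inj s x0)) ^+ 2 * s else s.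

Lemma iotaE s x0 : oddpt s = Some x0 ->
  forall x, iota s x = if x \in porbit s x0 then s^-1 x else s x.
Proof.
move=> h x; rewrite /iota h permM expgS expg1 !permM !(@permE _ (rinv s x0)) /rinv.
case xC: (x \in porbit s x0); last by rewrite xC.
by rewrite mem_porbitV xC permKV.
Qed.

Lemma porbit_iota s x : porbit (iota s) x = porbit s x.
Proof.
case h: (oddpt s) => [x0|]; last by rewrite /iota h.
case xC: (x \in porbit s x0).
- have Cx : porbit s x = porbit s x0 by apply/eqP; rewrite eq_porbit_mem.
  rewrite -(porbitV s x); apply: porbit_agree => z.
  rewrite porbitV Cx => zC; rewrite (iotaE h) zC //.
- apply: porbit_agree => z zx; rewrite (iotaE h).
  case zC: (z \in porbit s x0) => //.
  move: xC; rewrite -eq_porbit_mem.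
  have -> : porbit s x = porbit s z by apply/eqP; rewrite eq_porbit_mem porbit_sym.
  by rewrite eq_porbit_mem zC.
Qed.

Lemma oddpt_iota s : oddpt (iota s) = oddpt s.
Proof. by apply: eq_pick => x; rewrite /= porbit_iota. Qed.

Lemma iotaK s : iota (iota s) = s.
Proof.
case h: (oddpt s) => [x0|]; last by rewrite /iota h /iota h.
have h' : oddpt (iota s) = Some x0 by rewrite oddpt_iota.
apply/permP => x; rewrite (iotaE h') porbit_iota.
case xC: (x \in porbit s x0); last by rewrite (iotaE h) xC.
apply: (@perm_inj _ (iota s)); rewrite permKV (iotaE h) mem_porbitS xC.
by rewrite permK.
Qed.

Lemma odd_iota s : odd_perm (iota s) = odd_perm s.
Proof.
rewrite /iota; case: (oddpt s) => // x0.
by rewrite odd_permM expgS expg1 odd_permM addbb.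
Qed.

Lemma iota_neq s x0 : oddpt s = Some x0 -> (forall x, s x != x) -> iota s != s.
Proof.
move=> h fpf; apply/eqP => E.
have x0C : x0 \in porbit s x0 by apply: porbit_id.
have sx0 : s^-1 x0 = s x0 by rewrite -{2}E (iotaE h) x0C.
have ss : s (s x0) = x0 by rewrite -sx0 permKV.
have sub : porbit s x0 \subset [set x0; s x0].
  apply/subsetP => y /porbitP [i ->].
  elim: i => [|i IH]; first by rewrite expg0 perm1 !inE eqxx.
  rewrite expgSr permM; move: IH; rewrite !inE => /orP[]/eqP ->.
    by rewrite eqxx orbT.
  by rewrite ss eqxx.
have oddC : odd #|porbit s x0|.
  by move: h; rewrite /oddpt; case: pickP => // y hy [<-].
have sub2 : [set x0; s x0] \subset porbit s x0.
  by apply/subsetP => y; rewrite !inE => /orP[]/eqP ->; rewrite ?mem_porbitS x0C.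
have EC : porbit s x0 = [set x0; s x0] by apply/eqP; rewrite eqEsubset sub sub2.
move: oddC; rewrite EC cards2.
by have := fpf x0; rewrite eq_sym => ->.
Qed.

End Iota.
Section Even.
Variable X : finType.
Implicit Types (s t : {perm X}) (x y z : X).
Local Open Scope group_scope.

Lemma porbitS s x : porbit s (s x) = porbit s x.
Proof. by have := porbit_perm s 1 x; rewrite expg1. Qed.

Lemma even_orbits_P s : (forall x, ~~ odd #|porbit s x|) ->
  exists P : {set X}, forall x, (s x \in P) = (x \notin P).
Proof.
move=> ev.
pose r x := odflt x [pick y in porbit s x].
have rx x : r x \in porbit s x.
  by rewrite /r; case: pickP => [y ->|/(_ x)]; rewrite ?porbit_id.
have rS x : r (s x) = r x.
  by rewrite /r porbitS; case: pickP => // /(_ x); rewrite porbit_id.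
pose L x := #|porbit s x|.
pose tr x := traject s (r x) (L x).
have Pr x : porbit s (r x) = porbit s x by apply/eqP; rewrite eq_porbit_mem.
have trE x : porbit s x =i tr x.
  by move=> y; rewrite -Pr porbit_traject /tr /L Pr.
have utr x : uniq (tr x) by rewrite /tr /L -Pr uniq_traject_porbit.
have sztr x : size (tr x) = L x by rewrite size_traject.
pose d x := index x (tr x).
exists [set x | ~~ odd (d x)] => x; rewrite !inE negbK.
have xin : x \in tr x by rewrite -trE porbit_id.
have dlt : (d x < L x)%N by rewrite -sztr index_mem.
have xE : x = iter (d x) s (r x).
  by rewrite -(nth_traject s dlt) nth_index.
have trS : tr (s x) = tr x by rewrite /tr /L rS porbitS.
rewrite /d trS.
have Lev := ev x; rewrite -/(L x) in Lev.
case: (ltngtP (d x).+1 (L x)) => [lt|gt|eq].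
- have -> : s x = nth (r x) (tr x) (d x).+1 by rewrite nth_traject //= -xE.
  by rewrite index_uniq ?sztr //= negbK.
- by move: gt; rewrite ltnNge dlt.
- have -> : s x = r x.
    rewrite {1}xE -iterS eq.
    by have := iter_porbit s (r x); rewrite Pr.
  have -> : index (r x) (tr x) = 0%N by rewrite /tr; case: (L x) dlt => //= ?; rewrite eqxx.
  by move: Lev; rewrite -eq /= -/(d x); case: (odd (d x)).
Qed.
End Even.


Section Det.
Variable R : comRingType.
Variable k : nat.
Variable A : 'M[R]_k.
Hypothesis altA : forall i j, A j i = - A i j.
Hypothesis diagA : forall i, A i i = 0.

Let term (s : 'S_k) := (-1) ^+ s * \prod_i A i (s i).

Lemma prod_iota (s : 'S_k) x0 : oddpt s = Some x0 ->
  \prod_i A i (iota s i) = - \prod_i A i (s i).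
Proof.
move=> h; set C := porbit s x0.
have oddC : odd #|C|.
  by move: h; rewrite /C /oddpt; case: pickP => // y hy [<-].
rewrite (bigID (mem C)) [in RHS](bigID (mem C)) /=.
have -> : \prod_(i in C) A i (iota s i) = \prod_(i in C) A i ((s^-1)%g i).
  by apply: eq_bigr => i iC; rewrite (iotaE h) iC.
have -> : \prod_(i | i \notin C) A i (iota s i) = \prod_(i | i \notin C) A i (s i).
  by apply: eq_bigr => i iC; rewrite (iotaE h) (negPf iC).
rewrite (reindex_inj (@perm_inj _ s)) /=.
have -> : \prod_(j | s j \in C) A (s j) ((s^-1)%g (s j)) = \prod_(j in C) - A j (s j).
  by apply: eq_big => j; rewrite ?mem_porbitS // permK altA.
by rewrite prodrN -signr_odd oddC expr1 mulN1r mulNr.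
Qed.

Lemma term_iota (s : 'S_k) x0 : oddpt s = Some x0 -> term (iota s) = - term s.
Proof. by move=> h; rewrite /term odd_iota (prod_iota h) mulrN. Qed.

Lemma det_alt : \det A != 0 ->
  exists2 s : 'S_k, (forall i, A i (s i) != 0) &
    exists P : {set 'I_k}, forall i, (s i \in P) = (i \notin P).
Proof.
move=> dA.
pose fpf (s : 'S_k) := [forall i, s i != i].
have H0 : \sum_(s : 'S_k | oddpt s != None) term s = 0.
  rewrite (bigID fpf) /= addrC big1 ?add0r; last first.
    move=> s /andP[_ /forallPn [i]]; rewrite negbK => /eqP si.
    by rewrite /term (bigD1 i) //= si diagA mul0r mulr0.
  have -> : \sum_(s | (oddpt s != None) && fpf s) term s =
            \sum_(s in [set s : 'S_k | (oddpt s != None) && fpf s]) term s.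
    by apply: eq_bigl => s; rewrite inE.
  apply: (sum_invol (g := @iota _)) => s; rewrite !inE => /andP[os fs].
  case hs: (oddpt s) os => [x0|//] _.
  split.
  - rewrite oddpt_iota hs /=; apply/forallP => i; rewrite (iotaE hs).
    case: (i \in porbit s x0); last exact: (forallP fs).
    apply: contra (forallP fs i) => /eqP e.
    by rewrite -{1}e permKV.
  - exact: iotaK.
  - by apply: (iota_neq hs) => i; apply: (forallP fs).
  - exact: (term_iota hs).
move: dA; rewrite /determinant -/term (bigID (fun s => oddpt s != None)) /= H0 add0r.
case: (boolP [exists s : 'S_k, (oddpt s == None) && (term s != 0)]).
  case/existsP => s /andP[/eqP os ts] _.
  exists s.
    move=> i; apply: contra ts => /eqP z.
    by rewrite /term (bigD1 i) //= z mul0r mulr0.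
  apply: even_orbits_P => x.
  by move: os; rewrite /oddpt; case: pickP => // /(_ x) ->.
rewrite negb_exists => /forallP H; rewrite big1 ?eqxx // => s.
by rewrite negbK => os; move: (H s); rewrite os /= negbK => /eqP.
Qed.
End Det.


Section Lie.
Variables (K : fieldType) (T : finType) (e : rel T).
Local Notation g := (graphLie K T e).
Local Notation E := (Edge T e).
Local Notation V := {ffun T -> K^o}.

Definition dE (p : E) : {ffun E -> K^o} := [ffun q => (q == p)%:R].
Definition dV (t : T) : V := [ffun s => (s == t)%:R].

Definition cf (l : 'Hom(g, K^o)) (p : E) : K := l (0, dE p).
Definition beta (l : 'Hom(g, K^o)) (a b : V) : K :=
  \sum_p cf l p * (a (val p).1 * b (val p).2 - a (val p).2 * b (val p).1).

Lemma lZ (U : vectType K) (l : 'Hom(U, K^o)) a u : l (a *: u) = a * l u.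
Proof. by rewrite linearZ. Qed.

Lemma ffun_expand (I : finType) (w : {ffun I -> K^o}) :
  w = \sum_p w p *: [ffun q => (q == p)%:R].
Proof.
apply/ffunP => q; rewrite sum_ffunE (bigD1 q) //= big1 ?addr0.
  by rewrite !ffunE eqxx -[_ *: _]/(w q * 1) mulr1.
by move=> p pq; rewrite !ffunE eq_sym (negPf pq) -[_ *: _]/(w p * 0) mulr0.
Qed.

Lemma l_pair0 (l : 'Hom(g, K^o)) (w : {ffun E -> K^o}) :
  l (0, w) = \sum_p w p * cf l p.
Proof.
have -> : ((0 : V), w) = \sum_p w p *: ((0 : V), dE p).
  rewrite {1}(ffun_expand w).
  elim/big_rec2: _ => [//|p a b _ <-].
  apply/eqP; rewrite xpair_eqE /= scaler0 add0r eqxx /=.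
  by [].
rewrite raddf_sum; apply: eq_bigr => p _.
exact: lZ.
Qed.

Lemma l_bracket (l : 'Hom(g, K^o)) x y : l (glie_bracket x y) = beta l x.1 y.1.
Proof.
rewrite /glie_bracket l_pair0 /beta; apply: eq_bigr => p _.
by rewrite ffunE mulrC.
Qed.
End Lie.



Section Beta.
Variables (K : fieldType) (T : finType) (e : rel T).
Local Notation g := (graphLie K T e).
Local Notation E := (Edge T e).
Local Notation V := {ffun T -> K^o}.
Variable l : 'Hom(g, K^o).
Local Notation b := (beta l).

Lemma scK (a : K) (u : K^o) : a *: u = a * u.
Proof. by []. Qed.

Lemma betaC (x y : V) : b x y = - b y x.
Proof.
rewrite /beta -sumrN; apply: eq_bigr => p _; ring.
Qed.

Lemma beta_linl (y : V) : linear (fun x : V => (b x y : K^o)).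
Proof.
move=> c x1 x2; rewrite /beta scaler_sumr -big_split /=.
apply: eq_bigr => p _; rewrite !ffunE !scK; ring.
Qed.

Lemma beta_linr (x : V) : linear (fun y : V => (b x y : K^o)).
Proof.
move=> c y1 y2; rewrite /beta scaler_sumr -big_split /=.
apply: eq_bigr => p _; rewrite !ffunE !scK; ring.
Qed.
End Beta.


Lemma lfunE' (K : fieldType) (U W : vectType K) (f : U -> W) : linear f -> linfun f =1 f.
Proof.
move=> fL.
pose ff : {linear U -> W} := HB.pack f (GRing.isLinear.Build _ _ _ _ f fL).
exact: (lfunE ff).
Qed.

Section Stab.
Variables (K : fieldType) (T : finType) (e : rel T).
Local Notation g := (graphLie K T e).
Local Notation E := (Edge T e).
Local Notation V := {ffun T -> K^o}.
Variable l : 'Hom(g, K^o).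
Local Notation b := (beta l).

Definition Gb : 'Hom(V, 'Hom(V, K^o)) :=
  linfun (fun y : V => (linfun (fun x : V => (b x y : K^o)) : 'Hom(V, K^o))).

Lemma GbE y x : Gb y x = b x y.
Proof.
rewrite lfunE' ?lfunE' //; first exact: beta_linl.
move=> c y1 y2; apply/lfunP => z.
rewrite add_lfunE scale_lfunE !lfunE' //; try exact: beta_linl.
exact: beta_linr.
Qed.

Definition pi1 : 'Hom(g, V) := linfun (fun y : g => y.1).

Lemma pi1E y : pi1 y = y.1.
Proof. by rewrite lfunE'. Qed.

Lemma inner_lin (y : g) : linear (fun x : g => (l (glie_bracket x y) : K^o)).
Proof. by move=> c x1 x2; rewrite !l_bracket /=; apply: beta_linl. Qed.

Lemma outer_lin : linear (fun y : g =>
  (linfun (fun x : g => (l (glie_bracket x y) : K^o)) : 'Hom(g, K^o))).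
Proof.
move=> c y1 y2; apply/lfunP => x; rewrite add_lfunE scale_lfunE !lfunE'; try exact: inner_lin.
by rewrite !l_bracket /=; apply: beta_linr.
Qed.

Lemma stab_ker : stabilizer l = lker (Gb \o pi1)%VF.
Proof.
apply/vspaceP => y; rewrite !memv_ker comp_lfunE pi1E /stabilizer.
rewrite lfunE'; last exact: outer_lin.
apply/eqP/eqP => H; apply/lfunP => x; rewrite zero_lfunE.
  have := congr1 (fun f : 'Hom(g, K^o) => f (x, 0)) H.
  by rewrite /= zero_lfunE lfunE' ?l_bracket ?GbE //; exact: inner_lin.
by rewrite lfunE' ?l_bracket -?GbE ?H ?zero_lfunE //; exact: inner_lin.
Qed.

Lemma dim_ffun (I : finType) : dim {ffun I -> K^o} = #|I|.
Proof. exact: muln1. Qed.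

Lemma dim_g : \dim {: g} = (#|T| + #|{: E}|)%N.
Proof. by rewrite dimvf /dim /= !dim_ffun. Qed.

Lemma dim_V : \dim {: V} = #|T|.
Proof. by rewrite dimvf dim_ffun. Qed.

Lemma dim_stab : \dim (stabilizer l) = (\dim {: g} - \dim (limg Gb))%N.
Proof.
have := limg_ker_dim (Gb \o pi1)%VF fullv.
rewrite capfv -stab_ker limg_comp.
have -> : limg pi1 = fullv.
  apply/eqP; rewrite eqEsubv subvf /=; apply/subvP => a _.
  by rewrite -[a]/((a, 0 : {ffun E -> K^o}).1) -pi1E memv_img ?memvf.
by move=> <-; rewrite addnK.
Qed.
End Stab.


Section Match.
Variables (T : finType) (e : rel T).
Hypotheses (e_sym : symmetric e) (e_irr : irreflexive e).
Local Notation E := (Edge T e).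

Definition ord2 (s t : T) : T * T :=
  if (enum_rank s < enum_rank t)%N then (s, t) else (t, s).

Lemma ord2_edge s t : e s t -> edge_pred e (ord2 s t).
Proof.
move=> est; rewrite /edge_pred /ord2.
have st : s != t by apply: contraTneq est => ->; rewrite e_irr.
have rst : enum_rank s != enum_rank t by apply: contra st => /eqP/enum_rank_inj ->.
case: ltngtP => h /=.
- by rewrite est h.
- by rewrite e_sym est h.
- by move: rst; rewrite (val_inj h) eqxx.
Qed.

Lemma ord2_mem s t v : ((ord2 s t).1 == v) || ((ord2 s t).2 == v) = (s == v) || (t == v).
Proof. by rewrite /ord2; case: ltnP => _ //=; rewrite orbC. Qed.

Lemma matching_from_perm k (f : 'I_k -> T) (finj : injective f) (s : 'S_k)
  (P : {set 'I_k}) :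
  (forall i, e (f i) (f (s i))) -> (forall i, (s i \in P) = (i \notin P)) ->
  (k <= 2 * matching_number e)%N.
Proof.
move=> es sP.
pose eo (i : 'I_k) : E := Sub (ord2 (f i) (f (s i))) (ord2_edge (es i)).
have eoE i : val (eo i) = ord2 (f i) (f (s i)) by [].
have memeo i v : ((val (eo i)).1 == v) || ((val (eo i)).2 == v) =
                 (f i == v) || (f (s i) == v) by rewrite eoE ord2_mem.
pose S := [set eo i | i in P].
have key i j : i \in P -> j \in P -> forall v,
   (f i == v) || (f (s i) == v) -> (f j == v) || (f (s j) == v) -> i = j.
  move=> iP jP v /orP[]/eqP <- /orP[]/eqP/finj e1.
  - by rewrite e1.
  - by move: iP; rewrite -e1 sP jP.
  - by move: jP; rewrite e1 sP iP.
  - by rewrite (perm_inj e1).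
have cardS : #|S| = #|P|.
  apply: card_in_imset => i j iP jP eij.
  apply: (key i j iP jP (f i)); first by rewrite eqxx.
  by rewrite -memeo -eij memeo eqxx.
have mS : is_matching S.
  apply/forallP => v; apply/card_le1_eqP => p q.
  rewrite !inE => /andP[/imsetP[i iP ->] hi] /andP[/imsetP[j jP ->] hj].
  rewrite memeo in hi; rewrite memeo in hj.
  by rewrite (key i j iP jP v hi hj).
have cP : #|~: P| = #|P|.
  have -> : ~: P = [set s i | i in P].
    apply/setP => j; rewrite inE; apply/idP/imsetP => [jP|[i iP ->]].
      exists ((s^-1)%g j); last by rewrite permKV.
      by move: (sP ((s^-1)%g j)); rewrite permKV => /(congr1 negb); rewrite negbK => <-.
    by rewrite sP iP.
  by rewrite card_imset //; apply: perm_inj.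
have hk : k = (2 * #|P|)%N by rewrite -{1}(card_ord k) -(cardsC P) cP mul2n addnn.
rewrite hk leq_mul2l /= -cardS /matching_number.
by apply: leq_bigmax_cond.
Qed.
End Match.


Section Upper.
Variables (K : fieldType) (T : finType) (e : rel T).
Hypotheses (e_sym : symmetric e) (e_irr : irreflexive e).
Local Notation g := (graphLie K T e).
Local Notation E := (Edge T e).
Local Notation V := {ffun T -> K^o}.
Variable l : 'Hom(g, K^o).
Local Notation dV := (@dV K T).

Lemma beta_xx (x : V) : beta l x x = 0.
Proof. by rewrite /beta big1 // => p _; ring. Qed.

Lemma beta_supp s t : beta l (dV s) (dV t) != 0 -> e s t.
Proof.
apply: contraR => nst; rewrite /beta big1 // => p _.
have /andP[ep _] : edge_pred e (val p) := valP p.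
have h1 : ((val p).1 == s) && ((val p).2 == t) = false.
  by apply/negP => /andP[/eqP a /eqP b]; rewrite -a -b ep in nst.
have h2 : ((val p).2 == s) && ((val p).1 == t) = false.
  by apply/negP => /andP[/eqP a /eqP b]; rewrite -a -b e_sym ep in nst.
by rewrite !ffunE -!natrM !mulnb h1 h2 subrr mulr0.
Qed.

Lemma dim_limg_le : (\dim (limg (Gb l)) <= 2 * matching_number e)%N.
Proof.
pose Phi s := Gb l (dV s).
have GbE' y : Gb l y = \sum_s y s *: Phi s.
  by rewrite {1}(ffun_expand y) linear_sum; apply: eq_bigr => s _; rewrite linearZ.
pose X (I : {set T}) := [seq Phi s | s <- enum I].
have X0 : free (X set0) by rewrite /X enum_set0 nil_free.
have [I fI Imax] : exists2 I : {set T}, free (X I) &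
    (forall J, free (X J) -> #|J| <= #|I|)%N.
  by case: (@arg_maxnP _ set0 (fun I => free (X I)) (fun I : {set T} => #|I|) X0) => I fI Imax; exists I.
have Xspan s : Phi s \in <<X I>>%VS.
  case sI: (s \in I); first by apply: memv_span; apply: map_f; rewrite mem_enum.
  apply/negPn/negP => ns.
  have: free (X (s |: I)).
    rewrite (@perm_free _ _ _ (Phi s :: X I)) ?free_cons ?ns ?fI //.
    rewrite /X -map_cons; apply: perm_map; apply: uniq_perm; first exact: enum_uniq.
      by rewrite /= mem_enum sI enum_uniq.
    by move=> x; rewrite mem_enum in_setU1 inE mem_enum.
  by move/Imax; rewrite cardsU1 sI add1n ltnn.
have limg_sub : (limg (Gb l) <= <<X I>>)%VS.
  apply/subvP => _ /memv_imgP [y _ ->]; rewrite GbE'.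
  by apply: memv_suml => s _; apply: memvZ; exact: Xspan.
have dimI : (\dim (limg (Gb l)) <= #|I|)%N.
  apply: leq_trans (dimvS limg_sub) _; apply: leq_trans (dim_span _) _.
  by rewrite size_map -cardE.
apply: leq_trans dimI _.
pose f : 'I_#|I| -> T := enum_val.
have finj : injective f by apply: enum_val_inj.
have szX : size (X I) == #|I| by rewrite size_map -cardE.
pose tup := Tuple szX.
have tupE (i : 'I_#|I|) : tup`_i = Phi (f i).
  rewrite /= /X (nth_map (f i)) -?cardE ?ltn_ord //.
  by rewrite /f /enum_val; congr Phi; apply: set_nth_default; rewrite -cardE ltn_ord.
pose A : 'M[K]_#|I| := \matrix_(i, j) beta l (dV (f i)) (dV (f j)).
have Aunit : A \in unitmx.
  rewrite -row_free_unit -kermx_eq0; apply/rowV0P => v /sub_kermxP vA.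
  pose z := \sum_i v 0 i *: dV (f i).
  have hz j : beta l z (dV (f j)) = 0.
    move/rowP: vA => /(_ j); rewrite !mxE => <-.
    rewrite -GbE /z linear_sum; apply: eq_bigr => r _; rewrite linearZ /= GbE mxE.
    by [].
  have hz2 s : beta l (dV s) z = 0.
    have Ephi := coord_span (X := tup) (Xspan s).
    rewrite betaC -GbE -/(Phi s) Ephi sum_lfunE big1 ?oppr0 // => r _.
    by rewrite scale_lfunE tupE /Phi GbE hz scaler0.
  have fexp (a : V) : a = \sum_s a s *: dV s := ffun_expand a.
  have Gz : Gb l z = 0.
    apply/lfunP => a; rewrite zero_lfunE GbE (fexp a) -GbE linear_sum big1 // => s _.
    by rewrite linearZ /= GbE hz2 scaler0.
  have sv : \sum_i v 0 i *: tup`_i = 0.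
    apply: (etrans _ Gz); rewrite /z linear_sum; apply: eq_bigr => i _; by rewrite linearZ tupE.
  have fI' : free tup := fI.
  move/freeP: fI' => H.
  by apply/rowP => i; rewrite mxE; exact: H (fun i => v 0 i) sv i.
have dA : \det A != 0 by rewrite -unitfE -unitmxE.
have altA i j : A j i = - A i j by rewrite !mxE betaC.
have diagA i : A i i = 0 by rewrite mxE beta_xx.
have [sg sA [P sP]] := det_alt altA diagA dA.
apply: (matching_from_perm e_sym e_irr finj (s := sg) (P := P)) => //.
by move=> i; apply: beta_supp; move: (sA i); rewrite mxE.
Qed.
End Upper.


Section Lower.
Variables (K : fieldType) (T : finType) (e : rel T).
Hypotheses (e_sym : symmetric e) (e_irr : irreflexive e).
Local Notation g := (graphLie K T e).
Local Notation E := (Edge T e).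
Local Notation V := {ffun T -> K^o}.
Local Notation dV := (@dV K T).

Lemma matching_eq (S : {set E}) : is_matching S ->
  forall v p q, p \in S -> q \in S ->
  ((val p).1 == v) || ((val p).2 == v) -> ((val q).1 == v) || ((val q).2 == v) ->
  p = q.
Proof.
move=> /forallP mS v p q pS qS hp hq.
by apply: (card_le1_eqP (mS v)); rewrite inE ?pS ?qS.
Qed.

Lemma edge_neq (p : E) : (val p).1 != (val p).2.
Proof.
have /andP[ep _] : edge_pred e (val p) := valP p.
by apply: contraTneq ep => ->; rewrite e_irr.
Qed.

Lemma exists_l : exists l : 'Hom(g, K^o),
  \dim (limg (Gb l)) = (2 * matching_number e)%N.
Proof.
have m0 : is_matching (set0 : {set E}).
  apply/forallP => v; apply: leq_trans (leq_b1 false); rewrite leqn0 cards_eq0.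
  by apply/eqP/setP => p; rewrite !inE.
have [S0 mS0 S0max] : exists2 S0 : {set E}, is_matching S0 &
    (forall S : {set E}, is_matching S -> #|S| <= #|S0|)%N.
  by case: (@arg_maxnP _ set0 (@is_matching T e) (fun S : {set E} => #|S|) m0) => S mS Smax; exists S.
have nuE : matching_number e = #|S0|.
  apply/eqP; rewrite eqn_leq; apply/andP; split.
    by apply/bigmax_leqP => S; apply: S0max.
  by apply: leq_bigmax_cond.
pose l0f (x : g) : K^o := \sum_(p in S0) x.2 p.
have l0lin : linear l0f.
  move=> c x1 x2; rewrite /l0f scaler_sumr -big_split /=.
  by apply: eq_bigr => p _; rewrite !ffunE.
pose l0 : 'Hom(g, K^o) := linfun l0f.
exists l0.
have cfE p : cf l0 p = (p \in S0)%:R.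
  rewrite /cf lfunE' // /l0f /=.
  case pS: (p \in S0).
    rewrite (bigD1 p) //= ffunE eqxx big1 ?addr0 // => q /andP[_ qp].
    by rewrite ffunE (negPf qp).
  rewrite big1 // => q qS; rewrite ffunE; case: eqP => // qp.
  by rewrite -qp qS in pS.
have betaE (a y : V) : beta l0 a y =
    \sum_(p in S0) (a (val p).1 * y (val p).2 - a (val p).2 * y (val p).1).
  rewrite /beta (bigID (mem S0)) /= [X in _ + X]big1 ?addr0.
    by apply: eq_bigr => p pS; rewrite cfE pS mul1r.
  by move=> p pS; rewrite cfE (negPf pS) mul0r.
have other p q u : p \in S0 -> q \in S0 -> q != p ->
    ((val p).1 == u) || ((val p).2 == u) ->
    ((val q).1 == u) = false /\ ((val q).2 == u) = false.
  move=> pS qS qp hp.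
  have nq : ~~ (((val q).1 == u) || ((val q).2 == u)).
    by apply/negP => hq; move/eqP: qp; apply; exact: (matching_eq mS0 qS pS hq hp).
  by move: nq; rewrite negb_or => /andP[/negPf -> /negPf ->].
have b1 p (y : V) : p \in S0 -> beta l0 (dV (val p).1) y = y (val p).2.
  move=> pS; rewrite betaE (bigD1 p) //= big1 ?addr0.
    by rewrite !ffunE eqxx eq_sym (negPf (edge_neq p)) mul1r mul0r subr0.
  move=> q /andP[qS qp]; have [h1 h2] := other p q ((val p).1) pS qS qp (introT orP (or_introl (eqxx _))).
  by rewrite !ffunE h1 h2 !mul0r subrr.
have b2 p (y : V) : p \in S0 -> beta l0 (dV (val p).2) y = - y (val p).1.
  move=> pS; rewrite betaE (bigD1 p) //= big1 ?addr0.
    by rewrite !ffunE eqxx (negPf (edge_neq p)) mul1r mul0r sub0r.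
  move=> q /andP[qS qp]; have [h1 h2] := other p q ((val p).2) pS qS qp (introT orP (or_intror (eqxx _))).
  by rewrite !ffunE h1 h2 !mul0r subrr.
have kerM y : y \in lker (Gb l0) -> forall p, p \in S0 ->
    y (val p).1 = 0 /\ y (val p).2 = 0.
  rewrite memv_ker => /eqP Gy p pS.
  have z x : beta l0 x y = 0 by rewrite -GbE Gy zero_lfunE.
  split; last by rewrite -(b1 p y pS) z.
  by apply: oppr_inj; rewrite -(b2 p y pS) z oppr0.
pose M := [set v | [exists p in S0, ((val p).1 == v) || ((val p).2 == v)]].
have fexp (a : V) : a = \sum_s a s *: dV s := ffun_expand a.
have kerSub : (lker (Gb l0) <= <<[seq dV s | s <- enum (~: M)]>>)%VS.
  apply/subvP => y yk; rewrite (fexp y) (bigID (mem M)) /= big1 ?add0r.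
    apply: memv_suml => s sM; apply: memvZ; apply: memv_span; apply: map_f.
    by rewrite mem_enum inE sM.
  move=> s; rewrite inE => /existsP [p /andP[pS]] /orP[]/eqP <-.
    by have [-> _] := kerM y yk p pS; rewrite scale0r.
  by have [_ ->] := kerM y yk p pS; rewrite scale0r.
pose A1 := [set (val p).1 | p in S0].
pose A2 := [set (val p).2 | p in S0].
have MU : M = A1 :|: A2.
  apply/setP => v; rewrite !inE; apply/existsP/orP.
    move=> [p /andP[pS /orP[]/eqP <-]]; [left|right]; exact: imset_f.
  move=> [] /imsetP [p pS ->]; exists p; by rewrite pS eqxx ?orbT.
have cA1 : #|A1| = #|S0|.
  apply: card_in_imset => p q pS qS h.
  by apply: (matching_eq mS0 pS qS (introT orP (or_introl (eqxx _)))); rewrite h eqxx.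
have cA2 : #|A2| = #|S0|.
  apply: card_in_imset => p q pS qS h.
  by apply: (matching_eq mS0 pS qS (introT orP (or_intror (eqxx _)))); rewrite h eqxx orbT.
have cI : #|A1 :&: A2| = 0%N.
  apply/eqP; rewrite cards_eq0; apply/eqP/setP => v; rewrite !inE.
  apply/negP => /andP[/imsetP[p pS ->] /imsetP[q qS hq]].
  have pq : p = q.
    by apply: (matching_eq mS0 pS qS (introT orP (or_introl (eqxx _)))); rewrite hq eqxx orbT.
  by move: (edge_neq p); rewrite {2}pq -hq eqxx.
have cM : #|M| = (2 * #|S0|)%N.
  by have := cardsUI A1 A2; rewrite -MU cI addn0 cA1 cA2 => ->; rewrite addnn mul2n.
have hdim := limg_ker_dim (Gb l0) fullv; rewrite capfv dim_V in hdim.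
have hk := leq_trans (dimvS kerSub) (dim_span _); rewrite size_map -cardE in hk.
have hC := cardsC M.
have up := dim_limg_le e_sym e_irr l0.
rewrite nuE in up *; lia.
Qed.
End Lower.


Theorem proposition4p4 (K : fieldType) (T : finType) (e : rel T)
  (e_sym : symmetric e) (e_irr : irreflexive e) :
  let chi := (\dim {: graphLie K T e} - 2 * matching_number e)%N in
  [/\ chi = (#|T| + #|{: Edge T e}| - 2 * matching_number e)%N,
      exists l : 'Hom(graphLie K T e, K^o), \dim (stabilizer l) = chi
    & forall l : 'Hom(graphLie K T e, K^o), (chi <= \dim (stabilizer l))%N].
Proof.
move=> chi; split.
- by rewrite /chi dim_g.
- have [l hl] := @exists_l K T e e_sym e_irr.
  by exists l; rewrite dim_stab hl.
- move=> l; rewrite /chi dim_stab; apply: leq_sub2l.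
  exact: dim_limg_le.
Qed.
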